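(* Let $f$ be an extended strategy function for a tree $T=(V,E,w)$, let $v\in V$, and suppose some vertex screens $v$; let $s_{\min}$ be the vertex screening $v$ whose interval $f(s_{\min})$ is minimal (smallest) among all vertices screening $v$. Let $f'$ assign to each vertex $u$ an interval $f'(u)$ with $|f'(u)|\ge w(u)$ such that: (1) $f'(u)=f(u)$ for every $u\notin N(v)$; (2) $f'(u)=f(u)$ for every $u\in N(v)$ that screens $v$; (3) $f'(u)<f(s_{\min})$ for every $u\in N(v)$ that does not screen $v$ (including $u=v$). If the restriction of $f'$ to $N(v)$ is an extended strategy function for the subtree $T[N(v)]$, then $f'$ is an extended strategy function for $T$.
   Context: Intervals are of the form $[a,b)$ with integers $0\le a<b$, $|[a,b)|=b-a$; for $I=[a,b)$, $I'=[a',b')$ write $I>I'$ (equivalently $I'<I$) iff $a\ge b'$. An extended strategy function for a tree $T=(V,E,w)$ is a map $f$ assigning to each vertex $v$ an interval $f(v)$ with $|f(v)|\ge w(v)$, such that for any distinct $v_1,v_2$ with $f(v_1)\cap f(v_2)\ne\emptyset$, the path between $v_1$ and $v_2$ contains a vertex $v_3$ with $f(v_3)>f(v_1)$ and $f(v_3)>f(v_2)$. A vertex $u$ screens $v$ if $f(v)<f(u)$ and $u$ is the only vertex $x$ on the path between $v$ and $u$ with $f(v)<f(x)$; vertices screening $v$ have pairwise disjoint intervals, so there is a unique smallest. The screening neighborhood $N(v)$ is the set of vertices $u$ such that either $u$ screens $v$, or the path between $u$ and $v$ contains no vertex screening $v$ (in particular $v\in N(v)$); $T[N(v)]$ is the subtree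 induced by $N(v)$. *)

(* Defs.v *)
From mathcomp Require Import all_boot.
Set Implicit Arguments. Unset Strict Implicit. Unset Printing Implicit Defensive.

(* An interval [a,b) of nonnegative integers is represented by the pair (a,b);
   it is a genuine interval when a < b. *)
Definition ivalid (I : nat * nat) : Prop := I.1 < I.2.
Definition ilen (I : nat * nat) : nat := I.2 - I.1.
Definition igt (I J : nat * nat) : Prop := J.2 <= I.1.
Definition imeet (I J : nat * nat) : Prop :=
  exists x, I.1 <= x < I.2 /\ J.1 <= x < J.2.

Definition is_tree (V : finType) (e : rel V) : Prop :=
  [/\ symmetric e, irreflexive e, (forall u v, connect e u v)
    & ~ (exists c : seq V, [/\ 3 <= size c, uniq c & cycle e c])].

Definition spath (V : finType) (e : rel V) (S : V -> Prop) (u v : V) (p : seq V) : Prop :=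
  [/\ path e u p, last u p = v, uniq (u :: p) & forall x, x \in u :: p -> S x].

Definition on_path (V : finType) (e : rel V) (S : V -> Prop) (u v x : V) : Prop :=
  exists p, spath e S u v p /\ x \in u :: p.

Definition esf_on (V : finType) (e : rel V) (S : V -> Prop) (w : V -> nat)
    (f : V -> nat * nat) : Prop :=
  (forall v, S v -> ivalid (f v) /\ w v <= ilen (f v)) /\
  (forall v1 v2, S v1 -> S v2 -> v1 != v2 -> imeet (f v1) (f v2) ->
     exists v3, [/\ on_path e S v1 v2 v3, igt (f v3) (f v1) & igt (f v3) (f v2)]).

Definition esf (V : finType) (e : rel V) (w : V -> nat) (f : V -> nat * nat) : Prop :=
  esf_on e (fun _ => True) w f.

Definition screens (V : finType) (e : rel V) (f : V -> nat * nat) (v u : V) : Prop :=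
  igt (f u) (f v) /\
  (forall x, on_path e (fun _ => True) v u x -> igt (f x) (f v) -> x = u).

Definition in_N (V : finType) (e : rel V) (f : V -> nat * nat) (v u : V) : Prop :=
  screens e f v u \/
  ~ (exists x, on_path e (fun _ => True) u v x /\ screens e f v x).

(* Main.v *)
Require Import Defs.
From mathcomp Require Import all_boot zify.
From Stdlib Require Import Classical.
Set Implicit Arguments. Unset Strict Implicit. Unset Printing Implicit Defensive.

Section Tree.
Variables (V : finType) (e : rel V).
Hypothesis esym : symmetric e.
Hypothesis noc : ~ (exists c : seq V, [/\ 3 <= size c, uniq c & cycle e c]).

Lemma cyc_gen n : forall p u q a b p' q', size p <= n -> p = a :: p' -> q = b :: q' -> a != b ->
  path e u p -> path e u q -> last u p = last u q -> uniq (u :: p) -> uniq (u :: q) -> False.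
Proof.
elim: n => [|n IH] p u q a b p' q' Hs Ep Eq Hab; first by rewrite Ep in Hs.
move=> Hp Hq Hl Up Uq.
case: (boolP (a \in q)) => Ha.
- move: Hq Uq Hl Eq; case/splitPr: Ha => r q2 Hq Uq Hl Eq.
  case: r Hq Uq Hl Eq => [|b1 r1] Hq Uq Hl Eq.
    by case: Eq => E _; rewrite E eqxx in Hab.
  apply: noc; exists [:: a, u, b1 & r1]; split => //.
  + have H0 : u :: (b1 :: r1) ++ a :: q2 = (u :: b1 :: r1 ++ [:: a]) ++ q2.
      by rewrite /= -catA.
    move: Uq; rewrite H0 cat_uniq => /andP[H1 _].
    by rewrite -(rot_uniq 1) rot1_cons -cats1.
  + rewrite /= rcons_path; subst p; move: Hp => /= /andP[Hua _].
    rewrite esym Hua /=.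
    by move: Hq; rewrite cat_path /= => /andP[/andP[-> ->] /andP[-> _]].
- subst p; case: p' Hs Hp Hl Up => [|a' p''] Hs Hp Hl Up.
    move: Ha; rewrite /= in Hl; rewrite Hl Eq; have := mem_last b q'.
    by rewrite /= => ->.
  apply: (IH (a' :: p'') a (u :: q) a' u p'' q) => //.
  + by move: Up; rewrite /= !inE => /andP[/norP[_ /norP[H _]] _]; rewrite eq_sym.
  + by move: Hp => /= /andP[].
  + by move: Hp => /= /andP[Hua _]; rewrite esym Hua Hq.
  + by move: Up => /= /andP[_].
  + move: Up Uq; rewrite /= !inE => /andP[/norP[H _] _] ->.
    by rewrite negb_or eq_sym H Ha.
Qed.

Lemma path_uniq p : forall u q, path e u p -> path e u q -> last u p = last u q ->
  uniq (u :: p) -> uniq (u :: q) -> p = q.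
Proof.
elim: p => [|a p IH] u [|b q] //= Hp Hq Hl Up Uq.
- have := mem_last b q; rewrite -Hl => H.
  by move: Uq; rewrite /= H.
- have := mem_last a p; rewrite Hl => H.
  by move: Up; rewrite /= H.
- case: (eqVneq a b) => [E|Hab].
    subst b; congr cons; apply: (IH a) => //.
    + by case/andP: Hp.
    + by case/andP: Hq.
    + by case/andP: Up.
    + by case/andP: Uq.
  exfalso; apply: (@cyc_gen (size (a :: p)) (a :: p) u (b :: q) a b p q) => //.
Qed.

Notation TT := (fun _ : V => True).

Lemma spath_uniq u v p q : spath e TT u v p -> spath e TT u v q -> p = q.
Proof.
case=> Hp Lp Up _ [Hq Lq Uq _]; apply: (path_uniq Hp Hq) => //; by rewrite Lp Lq.
Qed.

Hypothesis conn : forall u v, connect e u v.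

Lemma spath_ex u v : exists p, spath e TT u v p.
Proof.
have /connectP [p Hp ->] := conn u v.
case: (shortenP Hp) => p' H1 H2 _; by exists p'.
Qed.

Lemma on_path_sym u v x : on_path e TT u v x -> on_path e TT v u x.
Proof.
case=> p [[Hp Lp Up _] Hx].
have E : rev (u :: p) = v :: rev (belast u p) by rewrite lastI rev_rcons Lp.
exists (rev (belast u p)); split; last by rewrite -E mem_rev.
split => //.
- have := rev_path e u p; rewrite Lp => ->.
  by rewrite (@eq_path _ _ e) // => a b; rewrite esym.
- by rewrite -(last_cons u) -E rev_cons last_rcons.
- by rewrite -E rev_uniq.
Qed.

Lemma on_path_T a b c x : on_path e TT a c x -> on_path e TT a b x \/ on_path e TT b c x.
Proof.
case=> P [HP Hx].
have [P1 [H1 L1 U1 _]] := spath_ex a b.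
have [P2 [H2 L2 U2 _]] := spath_ex b c.
have HW : path e a (P1 ++ P2) by rewrite cat_path H1 L1 H2.
have : last a (P1 ++ P2) = c by rewrite last_cat L1 L2.
case: (shortenP HW) => Q HQ UQ SQ LQ.
have EQ : P = Q by apply: (spath_uniq HP); split.
move: Hx; rewrite EQ inE => /orP [/eqP ->|/SQ].
  by left; exists P1; split => //; rewrite inE eqxx.
rewrite mem_cat => /orP [H|H].
  by left; exists P1; split => //; rewrite inE H orbT.
by right; exists P2; split => //; rewrite inE H orbT.
Qed.

Lemma prefix_path a b P1 x P2 Q : spath e TT a b (P1 ++ x :: P2) -> spath e TT a x Q ->
  Q = rcons P1 x.
Proof.
case=> HP _ UP _ HQ; apply: (spath_uniq HQ); split => //.
- by move: HP; rewrite -cat_rcons cat_path => /andP[].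
- by rewrite last_rcons.
- by move: UP; rewrite -cat_rcons -cat_cons cat_uniq => /andP[].
Qed.

Lemma on_path_sub a b x y : on_path e TT a b x -> on_path e TT a x y -> on_path e TT a b y.
Proof.
case=> P [HP Hx] [Q [HQ Hy]].
exists P; split => //.
move: Hx; rewrite inE => /orP [/eqP Ex|Hx].
  subst x; have EQ : Q = [::] by apply: (spath_uniq HQ); split.
  by move: Hy; rewrite EQ inE => /eqP ->; rewrite inE eqxx.
move: HP HQ; case/splitPr: Hx => P1 P2 HP HQ.
rewrite (prefix_path HP HQ) in Hy.
move: Hy; rewrite -cat_rcons -cat_cons mem_cat => ->; done.
Qed.

Lemma on_path_weak S u v x : on_path e S u v x -> on_path e TT u v x.
Proof. by case=> p [[H1 H2 H3 _] Hx]; exists p. Qed.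

End Tree.

Lemma split_first (T : eqType) (a : pred T) (P : seq T) : has a P ->
  exists P1 x P2, [/\ P = P1 ++ x :: P2, a x & ~~ has a P1].
Proof.
elim: P => [|y P IH] //= /orP [H|H].
  by exists [::], y, P.
case: (boolP (a y)) => Hy; first by exists [::], y, P.
have [P1 [x [P2 [-> Hx HP1]]]] := IH H.
by exists (y :: P1), x, P2; split => //=; rewrite negb_or Hy.
Qed.


Lemma igt_trans A B C : ivalid B -> igt A B -> igt B C -> igt A C.
Proof. rewrite /ivalid /igt; lia. Qed.
Lemma trich I J : ivalid I -> ivalid J -> imeet I J \/ igt I J \/ igt J I.
Proof.
rewrite /ivalid /igt /imeet => HI HJ.
case: (leqP J.2 I.1) => H1; first by right; left.
case: (leqP I.2 J.1) => H2; first by right; right.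
left; exists (maxn I.1 J.1); lia.
Qed.
Lemma meet_gt I J : imeet I J -> igt J I -> False.
Proof. rewrite /imeet /igt => -[x Hx] H; lia. Qed.
Lemma meet_sym I J : imeet I J -> imeet J I.
Proof. by case=> x [H1 H2]; exists x. Qed.
Lemma gt_irr I : ivalid I -> igt I I -> False.
Proof. rewrite /ivalid /igt; lia. Qed.


Theorem mainTheorem15 (V : finType) (e : rel V) (w : V -> nat)
  (f f' : V -> nat * nat) (v smin : V) :
  is_tree e ->
  esf e w f ->
  screens e f v smin ->
  (forall s, screens e f v s -> s = smin \/ igt (f s) (f smin)) ->
  (forall u, ivalid (f' u) /\ w u <= ilen (f' u)) ->
  (forall u, ~ in_N e f v u -> f' u = f u) ->
  (forall u, in_N e f v u -> screens e f v u -> f' u = f u) ->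
  (forall u, in_N e f v u -> ~ screens e f v u -> igt (f smin) (f' u)) ->
  esf_on e (in_N e f v) w f' ->
  esf e w f'.
Proof.
move=> [esym irr conn noc] Hf Hsm Hmin Hv' Hout Hscr Hin HN.
have fv : forall x, ivalid (f x) by move=> x; case: (Hf.1 x I).
have f'eq : forall u, ~ (in_N e f v u /\ ~ screens e f v u) -> f' u = f u.
  move=> u H; case: (classic (in_N e f v u)) => Hu; last exact: Hout.
  apply: Hscr => //; apply: NNPP => Hs; exact: H (conj Hu Hs).
have L1 : forall u, in_N e f v u -> ~ screens e f v u -> ~ igt (f u) (f v).
  move=> u Hu Hns Hgt.
  have Huv : u <> v by move=> E; subst u; exact: gt_irr (fv v) Hgt.
  have [P HP] := spath_ex conn v u.
  have Hhas : has (fun x => (f v).2 <= (f x).1) P.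
    apply/hasP; exists u; last exact: Hgt.
    case: HP => _ L _ _.
    have := mem_last v P; rewrite L inE => /orP [/eqP E|//]; by case: Huv.
  have [P1 [x [P2 [EP Hx HP1]]]] := split_first Hhas.
  have Sx : screens e f v x.
    split => // y [Q [HQ Hy]] Hyv.
    rewrite EP in HP; rewrite (prefix_path esym noc HP HQ) in Hy.
    move: Hy; rewrite inE => /orP [/eqP E|]; first by subst y; case: (gt_irr (fv v) Hyv).
    rewrite mem_rcons inE => /orP [/eqP //|Hy1].
    by move/hasPn: HP1 => /(_ y Hy1); rewrite /igt in Hyv; rewrite Hyv.
  have Hxp : on_path e (fun _ => True) u v x.
    apply: (on_path_sym esym); exists P; split => //.
    by rewrite EP inE mem_cat inE eqxx !orbT.
  case: Hu => [H|Hne]; first exact: Hns H.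
  apply: Hne; exists x; split => //.
have outS : forall u, ~ in_N e f v u ->
    exists s, on_path e (fun _ => True) u v s /\ screens e f v s.
  move=> u Hu; apply: NNPP => H; apply: Hu; right; exact: H.
have Hsm_gt : forall s u, screens e f v s -> in_N e f v u -> ~ screens e f v u ->
    igt (f s) (f' u).
  move=> s u Hs Hu Hnu; have := Hin u Hu Hnu.
  case: (Hmin s Hs) => [->//|H1 H2]; exact: igt_trans (fv smin) H1 H2.
have caseC : forall v1 v2, in_N e f v v1 -> ~ in_N e f v v2 -> imeet (f' v1) (f' v2) ->
    exists v3, [/\ on_path e (fun _ => True) v1 v2 v3, igt (f' v3) (f' v1)
                & igt (f' v3) (f' v2)].
  move=> v1 v2 H1 H2 Hm.
  have Hne : v1 != v2 by apply/eqP => E; subst; contradiction.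
  have E2 : f' v2 = f v2 := Hout v2 H2.
  case: (classic (screens e f v v1)) => S1.
  - have E1 : f' v1 = f v1 := Hscr v1 H1 S1.
    rewrite E1 E2 in Hm *.
    have [v3 [P3 G1 G2]] := Hf.2 v1 v2 I I Hne Hm.
    have G3 : igt (f v3) (f v) := igt_trans (fv v1) G1 S1.1.
    have E3 : f' v3 = f v3 by apply: f'eq => -[Hi Hni]; exact: L1 Hi Hni G3.
    by exists v3; rewrite E3.
  - have [s [Hs Ss]] := outS v2 H2.
    have Hs' : on_path e (fun _ => True) v2 v1 s.
      case: (on_path_T esym noc conn v1 Hs) => // Hsv.
      exfalso; case: H1 => // H1; apply: H1; exists s; split => //.
    have G1 : igt (f s) (f' v1) := Hsm_gt s v1 Ss H1 S1.
    have Es : f' s = f s := Hscr s (or_introl Ss) Ss.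
    case: (trich (fv s) (fv v2)) => [Hm2|[G2|G2]].
    + have Hsv2 : s != v2 by apply/eqP => E; subst s; apply: H2; left.
      have [y [Py Y1 Y2]] := Hf.2 s v2 I I Hsv2 Hm2.
      have Ey : f' y = f y.
        apply: f'eq => -[Hi Hni]; apply: (L1 y Hi Hni); exact: igt_trans (fv s) Y1 Ss.1.
      exists y; split.
      * apply: (on_path_sym esym); apply: (on_path_sub esym noc Hs').
        exact: (on_path_sym esym Py).
      * rewrite Ey; exact: igt_trans (fv s) Y1 G1.
      * by rewrite Ey E2.
    + exists s; split; rewrite ?Es ?E2 //; exact: (on_path_sym esym).
    + exfalso; apply: (meet_gt Hm); rewrite E2; exact: igt_trans (fv s) G2 G1.
split; first by move=> u _; exact: Hv'.
move=> v1 v2 _ _ Hne Hm.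
case: (classic (in_N e f v v1)) => H1; case: (classic (in_N e f v v2)) => H2.
- have [v3 [P G1 G2]] := HN.2 v1 v2 H1 H2 Hne Hm.
  by exists v3; split => //; exact: on_path_weak P.
- exact: caseC.
- have [v3 [P G1 G2]] := caseC v2 v1 H2 H1 (meet_sym Hm).
  by exists v3; split => //; exact: (on_path_sym esym).
- have E1 := Hout v1 H1; have E2 := Hout v2 H2.
  rewrite E1 E2 in Hm.
  have [v3 [P3 G1 G2]] := Hf.2 v1 v2 I I Hne Hm.
  case: (classic (in_N e f v v3 /\ ~ screens e f v v3)) => [[Hi Hni]|Hni]; last first.
    by exists v3; rewrite f'eq // E1 E2.
  have NG := L1 v3 Hi Hni.
  have [s [Hs Ss]] := outS v1 H1.
  case: (on_path_T esym noc conn v3 Hs) => Hs'.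
  + have Es : f' s = f s := Hscr s (or_introl Ss) Ss.
    exists s; rewrite Es E1 E2; split.
    * exact: (on_path_sub esym noc P3 Hs').
    * move: NG G1 Ss.1; rewrite /igt; lia.
    * move: NG G2 Ss.1; rewrite /igt; lia.
  + exfalso; case: Hi => // H; apply: H; exists s; split => //.
Qed.
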